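(* Let $B$ be a (3,3)-SAT instance with variables $x_1,\dots,x_n$ and clauses $C_1,\dots,C_m$, and let $(G,Z,\mathrm{col},\bar\alpha,\bar\beta,t)$ be the Fair Colorful Weighted Perfect Matching instance constructed from $B$ as described in the context. If $B$ is satisfiable, then $G$ has a perfect matching of total weight at least $t=3n+m$ in which, for every color, exactly one vertex of that color is matched to a vertex of $Z$.
   Context: (3,3)-SAT: a CNF formula $B=C_1\wedge\dots\wedge C_m$ over variables $x_1,\dots,x_n$, where each clause contains at most three literals and each variable occurs in at most three clauses in total; the question is whether $B$ is satisfiable. Construction: for each variable $x_i$ add to $V$ the six vertices $(x_i^T,r),(x_i^F,r)$ for $r\in\{1,2,3\}$ and to $W$ the three vertices $(x_i,a),(x_i,b),(x_i,c)$, all three placed in $Z$ (so $|Z|=3n$); introduce three new colors $c_{i,1},c_{i,2},c_{i,3}$ with $\mathrm{col}((x_i^T,r))=\mathrm{col}((x_i^F,r))=c_{i,r}$. Give weight $1$ to the edges $(x_i,a)$–$(x_i^T,1)$, $(x_i,a)$–$(x_i^F,3)$, $(x_i,b)$–$(x_i^T,2)$, $(x_i,b)$–$(x_i^F,1)$, $(x_i,c)$–$(x_i^T,3)$, $(x_i,c)$–$(x_i^F,2)$. For each clause $C_j$ add a vertex $C_j$ to $W$; fixing an ordering of the clauses, for each literal of $x_i$ in $C_j$ that is the $r$-th occurrence of $x_i$ in $B$, add a weight-$1$ edge $(x_i^T,r)$–$C_j$ if the literal is $x_i$ and $(x_i^F,r)$–$C_j$ if it is $\neg x_i$. Add dummy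 vertices to $W$ until $|W|=|V|=6n$; all remaining pairs in $V\times W$ get weight-$0$ edges, making $G$ complete bipartite. Set $t=3n+m$ and $\alpha_c=\beta_c=1/(3n)$ for every color $c$ (so exactly one vertex of each color must be matched into $Z$). *)

(* Defs.v *)
From mathcomp Require Import all_boot.
Set Implicit Arguments. Unset Strict Implicit. Unset Printing Implicit Defensive.

(* A literal over variables 'I_n : (variable, polarity); polarity true = x_i,
   false = ~ x_i. *)
Definition literal (n : nat) := ('I_n * bool)%type.
Definition cnf (n m : nat) := 'I_m -> seq (literal n).

Definition occ n m (B : cnf n m) (i : 'I_n) : seq ('I_m * bool) :=
  flatten [seq [seq (j, l.2) | l <- B j & l.1 == i] | j <- enum 'I_m].

Definition is_33sat n m (B : cnf n m) : Prop :=
  (forall j, size (B j) <= 3) /\ (forall i, size (occ B i) <= 3).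

Definition lit_true n (a : 'I_n -> bool) (l : literal n) : bool := a l.1 == l.2.

Definition satisfiable n m (B : cnf n m) : Prop :=
  exists a : 'I_n -> bool, forall j, has (lit_true a) (B j).

(* V : vertices (x_i^T, r) = (i, r, true) and (x_i^F, r) = (i, r, false),
   with r in {1,2,3} encoded as 'I_3 = {0,1,2}. *)
Definition Vtx (n : nat) := ('I_n * 'I_3 * bool)%type.
(* W : variable vertices (x_i, k), k in {a,b,c} encoded as 'I_3 = {0,1,2};
   clause vertices C_j; and 3n - m dummy vertices, so |W| = 6n when m <= 3n. *)
Definition Wtx (n m : nat) := (('I_n * 'I_3) + ('I_m + 'I_(3 * n - m)))%type.

Definition inZ n m (w : Wtx n m) : bool := if w is inl _ then true else false.

Definition color n (v : Vtx n) : 'I_n * 'I_3 := v.1.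

(* Edge weights (G is complete bipartite; weight 1 or 0). *)
Definition weight n m (B : cnf n m) (v : Vtx n) (w : Wtx n m) : nat :=
  let: (i, r, b) := v in
  match w with
  | inl (i', k) =>
      (i == i') && (if b then k == r else (k : nat) == (r.+1 %% 3))
  | inr (inl j) =>
      nth None [seq Some o | o <- occ B i] r == Some (j, b)
  | inr (inr _) => false
  end.

Definition perfect_matching n m (M : {set Vtx n * Wtx n m}) : Prop :=
  (forall v : Vtx n, #|[set w | (v, w) \in M]| = 1) /\
  (forall w : Wtx n m, #|[set v | (v, w) \in M]| = 1).

Definition mweight n m (B : cnf n m) (M : {set Vtx n * Wtx n m}) : nat :=
  \sum_(e in M) weight B e.1 e.2.

(* Fairness: for every colour c, exactly one vertex of colour c is matched
   to a vertex of Z (alpha_c = beta_c = 1/(3n) with |Z| = 3n). *)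
Definition fair n m (M : {set Vtx n * Wtx n m}) : Prop :=
  forall c : 'I_n * 'I_3,
    #|[set e in M | (color e.1 == c) && inZ e.2]| = 1.

(* Main.v *)
Require Import Defs.
From mathcomp Require Import all_boot zify.

Definition rk (b : bool) (k : 'I_3) : 'I_3 := if b then k else Ordinal (@ltn_pmod (k+2) 3 isT).
Definition rinv (b : bool) (k : 'I_3) : 'I_3 := if b then k else Ordinal (@ltn_pmod (k+1) 3 isT).
Lemma rk_inj b : injective (rk b).
Proof. case: b => // k1 k2 /(congr1 val) /= E; apply: val_inj => /=.
have := ltn_ord k1; have := ltn_ord k2; lia. Qed.
Lemma rk_rinv b r : rk b (rinv b r) = r.
Proof. case: b => //; apply: val_inj => /=. have := ltn_ord r; lia. Qed.
Lemma rk_w b (k : 'I_3) : (if b then k == rk b k else (k:nat) == (rk b k).+1 %% 3) = true.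
Proof. case: b => /=; first by rewrite eqxx. apply/eqP; have := ltn_ord k; lia. Qed.

Theorem lemmaD4 (n m : nat) (B : cnf n m) :
  is_33sat B -> satisfiable B ->
  exists M : {set Vtx n * Wtx n m},
    perfect_matching M /\ 3 * n + m <= mweight B M /\ fair M.
Proof.
move=> [_ Hocc] [a Ha].
have [g Hg] : exists g : 'I_m -> Vtx n,
    forall j, (g j).2 = a (g j).1.1 /\ weight B (g j) (inr (inl j)) = 1.
  apply: (@fin_all_exists _ (fun=> Vtx n) (fun j v => v.2 = a v.1.1 /\ weight B v (inr (inl j)) = 1)) => j.
  have /hasP [l lin lt] := Ha j.
  have Hmem : (j, l.2) \in occ B l.1.
    apply/flattenP; exists [seq (j, l'.2) | l' <- B j & l'.1 == l.1].
      by apply/mapP; exists j; rewrite ?mem_enum.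
    by apply/mapP; exists l; rewrite // mem_filter eqxx.
  have hr : index (j, l.2) (occ B l.1) < 3.
    by apply: leq_trans (Hocc l.1); rewrite index_mem.
  exists (l.1, Ordinal hr, l.2); split; first by rewrite /= (eqP lt).
  rewrite /weight /= (nth_map (j, l.2)); last by rewrite index_mem.
  by rewrite nth_index // eqxx.
have g_inj : injective g.
  move=> j j' E; move: (Hg j).2 (Hg j').2; rewrite E.
  case: (g j') => [[i r] b] /=; case: eqP => // ->; by case: eqP => // -[].
pose F := [set v : Vtx n | v.2 == a v.1.1].
have cardF : #|F| = 3 * n.
  have -> : F = [set (p, a p.1) | p : 'I_n * 'I_3].
    apply/setP => -[p b]; rewrite !inE /=; apply/eqP/imsetP.
      by move=> ->; exists p.
    by case=> q _ [-> ->].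
  rewrite card_imset; last by move=> p q /(congr1 fst).
  by rewrite card_prod !card_ord mulnC.
pose G := g @: [set: 'I_m].
have cardG : #|G| = m by rewrite card_imset // cardsT card_ord.
have GF : G \subset F.
  by apply/subsetP => v /imsetP [j _ ->]; rewrite inE (Hg j).1.
have Hm : m <= 3 * n by rewrite -cardF -cardG subset_leq_card.
pose R := F :\: G.
have Eq : 3 * n - m = #|R| by rewrite cardsD (setIidPr GF) cardF cardG.
pose f (w : Wtx n m) : Vtx n := match w with
  | inl (i, k) => (i, rk (~~ a i) k, ~~ a i)
  | inr (inl j) => g j
  | inr (inr d) => enum_val (cast_ord Eq d) end.
have fF : forall w, (f w \in F) = ~~ inZ w.
  case=> [[i k]|[j|d]] /=; rewrite ?inE.
  - by case: (a i).
  - by rewrite (Hg j).1 eqxx.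
  - by have := enum_valP (cast_ord Eq d); rewrite !inE => /andP [].
have f_inj : injective f.
  have fZ : forall i k w, f (inl (i, k)) = f w -> w = inl (i, k).
    move=> i k w; case: w => [[i' k']|w].
      by rewrite /=; case=> Ei Er _; subst i'; move: Er => /rk_inj ->.
    by move=> E; have := fF (inr w); rewrite -E fF.
  case=> [[i k]|[j|d]] w E; first by rewrite (fZ _ _ _ E).
  - case: w E => [[i k]|[j'|d']] /= E.
    + by rewrite (fZ i k (inr (inl j))).
    + by rewrite (g_inj _ _ E).
    + have := enum_valP (cast_ord Eq d'); rewrite -E inE /G.
      by rewrite imset_f.
  - case: w E => [[i k]|[j'|d']] /= E.
    + by rewrite (fZ i k (inr (inr d))).
    + have := enum_valP (cast_ord Eq d); rewrite E inE /G.
      by rewrite imset_f.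
    + by move/enum_val_inj/cast_ord_inj: E => ->.
have f_bij : bijective f.
  apply: (inj_card_bij f_inj).
  rewrite !card_sum !card_prod !card_ord card_bool; lia.
have [h fK hK] := f_bij.
exists [set (f w, w) | w : Wtx n m].
split; [split|split].
- move=> v; have -> : [set w | (v, w) \in [set (f w, w) | w : Wtx n m]] = [set h v].
    apply/setP => w; rewrite !inE; apply/imsetP/eqP.
      by case=> w' _ [-> ->]; rewrite fK.
    by move=> ->; exists (h v); rewrite ?hK.
  by rewrite cards1.
- move=> w; have -> : [set v | (v, w) \in [set (f w, w) | w : Wtx n m]] = [set f w].
    apply/setP => v; rewrite !inE; apply/imsetP/eqP.
      by case=> w' _ [-> ->].
    by move=> ->; exists w.
  by rewrite cards1.
- rewrite /mweight big_imset /=; last by move=> x y _ _ [].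
  rewrite big_sumType /= big_sumType /=.
  rewrite [X in _ <= X + _](eq_bigr (fun=> 1)); last first.
    by move=> -[i k] _; rewrite /= eqxx /= rk_w.
  rewrite [X in _ <= _ + (X + _)](eq_bigr (fun=> 1)); last first.
    by move=> j _; rewrite (Hg j).2.
  rewrite !sum1_card.
  rewrite card_prod !card_ord; lia.
- move=> [i r].
  set k0 := rinv (~~ a i) r.
  have -> : [set e in [set (f w, w) | w : Wtx n m] | (color e.1 == (i, r)) && inZ e.2]
      = [set (f (inl (i, k0)), inl (i, k0))].
    apply/setP => e; rewrite !inE; apply/andP/eqP.
      case=> /imsetP [w _ ->] /= /andP [].
      case: w => [[i' k]|w] //= /eqP [Ei Er] _; subst i'.
      suff -> : k0 = k by [].
      by apply: (@rk_inj (~~ a i)); rewrite /k0 rk_rinv Er.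
    move=> ->; split; first by apply: imset_f.
    by rewrite /= /k0 rk_rinv eqxx.
  by rewrite cards1.
Qed.
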